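(* Let $\alpha,\beta,\gamma\in\mathbb{Z}_2^n$ and $a\in\mathbb{Z}_2$. Then $$\mathrm{padp}_{a,0}(\alpha,\beta,\gamma)+\mathrm{padp}_{a\oplus1,1}(\alpha,\beta,\gamma)\le\mathrm{padp}_{0,0}(\alpha,\alpha,0)+\mathrm{padp}_{1,1}(\alpha,\alpha,0).$$
   Context: Indices $0,\dots,7$ are identified with $\mathbb{Z}_2^3$ via $(p_0,p_1,p_2)\leftrightarrow4p_0+2p_1+p_2$; $e_0,\dots,e_7$ are the standard basis row vectors of $\mathbb{Q}^8$. $A_0$ is $\frac14$ times the $8\times8$ matrix with rows $(4,0,0,1,0,1,1,0)$, $(0,0,0,1,0,1,0,0)$, $(0,0,0,1,0,0,1,0)$, $(0,0,0,1,0,0,0,0)$, $(0,0,0,0,0,1,1,0)$, $(0,0,0,0,0,1,0,0)$, $(0,0,0,0,0,0,1,0)$, $(0,\dots,0)$, and $(A_k)_{i,j}=(A_0)_{i\oplus k,j\oplus k}$. For $\alpha,\beta,\gamma\in\mathbb{Z}_2^n$ let $\omega_i=4\alpha_i+2\beta_i+\gamma_i$. With $L_{0,0}=(1,1,0,0,0,0,0,0)$, $L_{0,1}=(0,0,1,1,0,0,0,0)$, $L_{1,0}=(0,0,0,0,1,1,0,0)$, $L_{1,1}=(0,0,0,0,0,0,1,1)$, $\mathrm{padp}_{a,b}(\alpha,\beta,\gamma)=L_{a,b}A_{\omega_0}\cdots A_{\omega_{n-1}}e_0^T$. *)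

(* Defs.v *)
From mathcomp Require Import all_boot all_order all_algebra.
Set Implicit Arguments. Unset Strict Implicit. Unset Printing Implicit Defensive.
Import Order.TTheory GRing.Theory Num.Theory.
Local Open Scope ring_scope.

Definition bit (p i : nat) : bool := odd (i %/ 2 ^ p).

Definition xor8 (i k : 'I_8) : 'I_8 :=
  inord (\sum_(p < 3) (bit p i != bit p k) * 2 ^ p)%N.

Definition A0_int : seq (seq nat) :=
  [:: [:: 4; 0; 0; 1; 0; 1; 1; 0];
      [:: 0; 0; 0; 1; 0; 1; 0; 0];
      [:: 0; 0; 0; 1; 0; 0; 1; 0];
      [:: 0; 0; 0; 1; 0; 0; 0; 0];
      [:: 0; 0; 0; 0; 0; 1; 1; 0];
      [:: 0; 0; 0; 0; 0; 1; 0; 0];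
      [:: 0; 0; 0; 0; 0; 0; 1; 0];
      [:: 0; 0; 0; 0; 0; 0; 0; 0]]%N.

Definition A0 : 'M[rat]_8 :=
  \matrix_(i < 8, j < 8) ((nth 0%N (nth [::] A0_int i) j)%:R / 4).

Definition Amat (k : 'I_8) : 'M[rat]_8 :=
  \matrix_(i < 8, j < 8) A0 (xor8 i k) (xor8 j k).

Definition b2n (b : bool) : nat := if b then 1%N else 0%N.

Definition Lvec (a b : bool) : 'rV[rat]_8 :=
  \row_(j < 8) (if (j %/ 2 == 2 * b2n a + b2n b)%N then 1 else 0).

Definition e0col : 'cV[rat]_8 := \col_(i < 8) (if i == 0 :> nat then 1 else 0).

Definition omega n (alpha beta gamma : n.-tuple bool) (i : 'I_n) : 'I_8 :=
  inord (4 * b2n (tnth alpha i) + 2 * b2n (tnth beta i) + b2n (tnth gamma i))%N.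

Definition padp (a b : bool) n (alpha beta gamma : n.-tuple bool) : rat :=
  (Lvec a b *m (\prod_(i < n) Amat (omega alpha beta gamma i)) *m e0col) 0 0.

(* Main.v *)
Require Import Defs.
From mathcomp Require Import all_boot all_order all_algebra.
From mathcomp Require Import ring lra.
Set Implicit Arguments. Unset Strict Implicit. Unset Printing Implicit Defensive.
Import Order.TTheory GRing.Theory Num.Theory.
Local Open Scope ring_scope.

Definition myxor (i k : nat) : nat :=
  ((bit 0 i != bit 0 k) * 1 + (bit 1 i != bit 1 k) * 2 + (bit 2 i != bit 2 k) * 4)%N.
Definition Nn (k i j : nat) : nat := nth 0%N (nth [::] A0_int (myxor i k)) (myxor j k).

Lemma myxor_lt i k : (myxor i k < 8)%N.
Proof. rewrite /myxor; do 3 case: (_ != _) => //. Qed.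

Lemma xor8E (i k : 'I_8) : nat_of_ord (xor8 i k) = myxor i k.
Proof.
rewrite /xor8 !big_ord_recr big_ord0 /= inordK; first by rewrite /myxor add0n.
by rewrite add0n -/(myxor i k) myxor_lt.
Qed.

Lemma AmatE k (i j : 'I_8) : Amat k i j = (Nn k i j)%:R / 4.
Proof. by rewrite !mxE !xor8E. Qed.

Arguments myxor : simpl never.
Arguments Nn : simpl never.

Definition Pl c c' j := sumn [seq ((myxor i c == 0%N) * Nn c' i j)%N | i <- iota 0 8].
Definition Ql c c' j := sumn [seq ((myxor i c \in [:: 3;5;6]%N) * Nn c' i j)%N | i <- iota 0 8].
Definition cond c c' j :=
  let P := Pl c c' j in let Q := Ql c c' j in
  if myxor j c' == 0%N then
    (if (4 <= c)%N == (4 <= c')%N then (P,Q) \in [:: (4,0);(0,4);(0,0)]%N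
     else (P,Q) \in [:: (0,4);(0,0)]%N)
  else if myxor j c' \in [:: 3;5;6]%N then (P,Q) \in [:: (1,1);(0,2)]%N
  else (P,Q) == (0,0)%N.

Lemma chk : all (fun c => all (fun c' => all (fun j => cond c c' j) (iota 0 8)) (iota 0 8)) (iota 0 8).
Proof. vm_compute. reflexivity. Qed.

Definition stepf (c' : nat) (h : nat -> rat) (j : nat) : rat :=
  \sum_(i < 8) h i * (Nn c' i j)%:R / 4.

Definition bnd (a b : rat) c k : rat :=
  a * (myxor k c == 0%N)%:R + b * (myxor k c \in [:: 3;5;6]%N)%:R.

Definition Inv h c a b := forall k, (k < 8)%N -> 0 <= h k <= bnd a b c k.

Lemma condP c c' j : (c < 8)%N -> (c' < 8)%N -> (j < 8)%N -> cond c c' j.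
Proof.
move=> hc hc' hj.
move/allP: chk => /(_ c); rewrite mem_iota hc => /(_ isT).
move/allP => /(_ c'); rewrite mem_iota hc' => /(_ isT).
by move/allP => /(_ j); rewrite mem_iota hj => /(_ isT).
Qed.

Lemma sum_bnd a b c c' j :
  \sum_(i < 8) bnd a b c i * (Nn c' i j)%:R / 4 =
  (a * (Pl c c' j)%:R + b * (Ql c c' j)%:R) / 4.
Proof.
rewrite !big_ord_recr big_ord0 /= /bnd /Pl /Ql /= !natrD !natrM.
ring.
Qed.

Lemma step_inv h c c' a b : Inv h c a b -> 0 <= b -> b <= a ->
  (c < 8)%N -> (c' < 8)%N ->
  Inv (stepf c' h) c' (if (4 <= c)%N == (4 <= c')%N then a else b) ((a + b) / 4).
Proof.
move=> Hh b0 ba hc hc' j hj.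
have Hle : stepf c' h j <= (a * (Pl c c' j)%:R + b * (Ql c c' j)%:R) / 4.
  rewrite -sum_bnd /stepf; apply: ler_sum => i _.
  rewrite -!mulrA; apply: ler_wpM2r.
    by rewrite mulr_ge0 // invr_ge0.
  by case/andP: (Hh i (ltn_ord i)).
have Hge : 0 <= stepf c' h j.
  rewrite /stepf; apply: sumr_ge0 => i _.
  rewrite -mulrA mulr_ge0 //; first by case/andP: (Hh i (ltn_ord i)).
  by rewrite mulr_ge0 // invr_ge0.
rewrite Hge /=.
have := condP hc hc' hj; rewrite /cond /bnd.
case: (myxor j c' =P 0%N) => [->|_] /=.
  rewrite mulr1 mulr0 addr0.
  case: ((4 <= c)%N == (4 <= c')%N).
    rewrite !inE => /or3P [] /eqP [HP HQ]; rewrite HP HQ in Hle; lra.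
  rewrite !inE => /orP [] /eqP [HP HQ]; rewrite HP HQ in Hle; lra.
rewrite mulr0 add0r.
case: (myxor j c' \in _).
  rewrite !inE mulr1 => /orP [] /eqP [HP HQ]; rewrite HP HQ in Hle; lra.
rewrite mulr0 => /eqP [HP HQ]; rewrite HP HQ in Hle; lra.
Qed.

Definition cu (t : bool) : nat := if t then 6%N else 0%N.

Lemma ustep h t t' a b : Inv h (cu t) a b -> h (cu t) = a -> h (cu (~~ t)) = b ->
  stepf (cu t') h (cu t') = (if t == t' then a else b) /\
  stepf (cu t') h (cu (~~ t')) = (a + b) / 4.
Proof.
case: t => Hi Ha Hb.
all: have H2 : h 2%N = 0 by
  have := Hi 2%N isT; rewrite /bnd /myxor /bit /= => /andP [? ?]; apply/eqP; rewrite eq_le; apply/andP; split; lra.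
all: have H4 : h 4%N = 0 by
  have := Hi 4%N isT; rewrite /bnd /myxor /bit /= => /andP [? ?]; apply/eqP; rewrite eq_le; apply/andP; split; lra.
all: rewrite /stepf !big_ord_recr !big_ord0 /=.
all: case: t' => /=; rewrite /Nn /myxor /bit /= H2 H4 ?Ha ?Hb; split; lra.
Qed.

Definition Ln (a : bool) (n : nat) : nat :=
  ((n %/ 2 == 2 * b2n a) + (n %/ 2 == 2 * b2n (~~ a) + 1))%N.

Arguments Ln : simpl never.

Definition Sl a c j := sumn [seq (Ln a i * Nn c i j)%N | i <- iota 0 8].

Definition bcond a c j :=
  if myxor j c == 0%N then (Sl a c j <= 4)%N
  else if myxor j c \in [:: 3;5;6]%N then Sl a c j == 2%N else Sl a c j == 0%N.

Lemma bchk : all (fun a => all (fun c => all (fun j => bcond a c j) (iota 0 8)) (iota 0 8)) [:: false; true].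
Proof. vm_compute. reflexivity. Qed.

Lemma bcondP a c j : (c < 8)%N -> (j < 8)%N -> bcond a c j.
Proof.
move=> hc hj.
have /allP /(_ a) := bchk; case: a => /(_ isT).
all: move/allP => /(_ c); rewrite mem_iota hc => /(_ isT).
all: by move/allP => /(_ j); rewrite mem_iota hj => /(_ isT).
Qed.

Lemma stepf_base a c j : stepf c (fun n => (Ln a n)%:R) j = (Sl a c j)%:R / 4.
Proof.
rewrite /stepf /Sl sumnE big_map.
have -> : iota 0 8 = index_iota 0 8 by [].
rewrite big_mkord natr_sum mulr_suml.
by apply: eq_bigr => i _; rewrite natrM.
Qed.

Lemma base_inv a c : (c < 8)%N -> Inv (stepf c (fun n => (Ln a n)%:R)) c 1 (1/2).
Proof.
move=> hc j hj; rewrite stepf_base /bnd.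
have := bcondP a hc hj; rewrite /bcond.
case: (myxor j c =P 0%N) => [->|_] /=.
  rewrite mulr1 mulr0 addr0 => H.
  have : ((Sl a c j)%:R <= 4%:R :> rat) by rewrite ler_nat.
  move: (ler0n rat (Sl a c j)) => ? ?; apply/andP; split; lra.
rewrite mulr0 add0r.
case: (myxor j c \in _) => /eqP ->; rewrite ?mulr1 ?mulr0; apply/andP; split; lra.
Qed.

Lemma base_u t : stepf (cu t) (fun n => (Ln false n)%:R) (cu t) = 1 /\
   stepf (cu t) (fun n => (Ln false n)%:R) (cu (~~ t)) = 1/2.
Proof.
rewrite !stepf_base; case: t; rewrite /Sl /Ln /Nn /myxor /bit /=; split; lra.
Qed.

Fixpoint Hseq (h0 : nat -> rat) (g : nat -> 'I_8) (k : nat) : nat -> rat :=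
  match k with 0 => h0 | k'.+1 => stepf (g k') (Hseq h0 g k') end.

Lemma link (L : 'rV[rat]_8) (g : nat -> 'I_8) k (j : 'I_8) :
  (L *m \prod_(i < k) Amat (g i)) 0 j = Hseq (fun n => L 0 (inord n)) g k j.
Proof.
elim: k j => [|k IH] j.
  by rewrite big_ord0 mulmx1 /= inord_val.
rewrite big_ord_recr /= -mulmxE mulmxA mxE /stepf.
by apply: eq_bigr => i _; rewrite IH AmatE mulrA.
Qed.

Fixpoint AB (s : nat -> bool) (k : nat) : rat * rat :=
  match k with
  | 0 => (1, 1/2)
  | k'.+1 => let p := AB s k' in
      if s k' == s k'.+1 then (p.1, (p.1 + p.2) / 4) else (p.2, (p.1 + p.2) / 4)
  end.

Lemma AB_prop s k : 0 <= (AB s k).2 /\ (AB s k).2 <= (AB s k).1 /\ (AB s k).1 <= 3 * (AB s k).2.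
Proof.
elim: k => [|k [H1 [H2 H3]]] /=; first by split; [|split]; lra.
case: (_ == _) => /=; split; [|split| |split]; lra.
Qed.

Lemma inv_seq h0 (g : nat -> 'I_8) :
  Inv (stepf (g 0%N) h0) (g 0%N) 1 (1/2) ->
  forall k, Inv (Hseq h0 g k.+1) (g k) (AB (fun m => (4 <= g m)%N) k).1 (AB (fun m => (4 <= g m)%N) k).2.
Proof.
move=> H0; elim=> [|k IH] //=.
have [H1 [H2 _]] := AB_prop (fun m => (4 <= g m)%N) k.
have := step_inv IH H1 H2 (ltn_ord (g k)) (ltn_ord (g k.+1)).
by case: (_ == _).
Qed.

Lemma eq_AB s1 s2 k : s1 =1 s2 -> AB s1 k = AB s2 k.
Proof. by move=> E; elim: k => [|k IH] //=; rewrite IH !E. Qed.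

Lemma useq h0 (g : nat -> 'I_8) (s : nat -> bool) :
  (forall m, nat_of_ord (g m) = cu (s m)) ->
  (forall t, stepf (cu t) h0 (cu t) = 1 /\ stepf (cu t) h0 (cu (~~ t)) = 1/2) ->
  Inv (stepf (g 0%N) h0) (g 0%N) 1 (1/2) ->
  forall k, Hseq h0 g k.+1 (cu (s k)) = (AB s k).1 /\ Hseq h0 g k.+1 (cu (~~ s k)) = (AB s k).2.
Proof.
move=> Hg Hb H0.
have Es : (fun m => (4 <= g m)%N) =1 s by move=> m; rewrite Hg; case: (s m).
have Hi := inv_seq H0.
elim=> [|k [IH1 IH2]] /=; first by rewrite Hg; apply: Hb.
have := Hi k; rewrite !(eq_AB _ Es) Hg => Hik.
have [E1 E2] := ustep (s k.+1) Hik IH1 IH2.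
move: E1 E2 => /=; rewrite !Hg => -> ->.
by case: (_ == _).
Qed.

Definition gv (al be ga : seq bool) (m : nat) : 'I_8 :=
  inord (4 * b2n (nth false al m) + 2 * b2n (nth false be m) + b2n (nth false ga m)).

Lemma gv_val al be ga m :
  nat_of_ord (gv al be ga m) = (4 * b2n (nth false al m) + 2 * b2n (nth false be m) + b2n (nth false ga m))%N.
Proof.
rewrite /gv inordK //.
by case: (nth false al m); case: (nth false be m); case: (nth false ga m).
Qed.

Lemma gv_top al be ga m : (4 <= gv al be ga m)%N = nth false al m.
Proof.
by rewrite gv_val; case: (nth false al m); case: (nth false be m); case: (nth false ga m).
Qed.

Lemma Hseq_ext h1 h2 g k j : (forall n, (n < 8)%N -> h1 n = h2 n) -> (j < 8)%N ->
  Hseq h1 g k j = Hseq h2 g k j.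
Proof.
move=> E; elim: k j => [|k IH] j hj /=; first exact: E.
by rewrite /stepf; apply: eq_bigr => i _; rewrite IH.
Qed.

Lemma Lsum a n : (n < 8)%N -> (Lvec a false + Lvec (~~ a) true) 0 (inord n) = (Ln a n)%:R :> rat.
Proof.
move=> hn; rewrite !mxE inordK // /Ln /= addn0 natrD.
by case: (_ == _); case: (_ == _).
Qed.

Lemma myxor0 c : (c < 8)%N -> myxor 0 c = c.
Proof. by case: c => [|[|[|[|[|[|[|[|]]]]]]]]. Qed.

Lemma e0P (M : 'rV[rat]_8) : (M *m e0col) 0 0 = M 0 0.
Proof.
rewrite mxE (bigD1 ord0) //= big1 ?addr0; first by rewrite mxE /= mulr1.
move=> i ne; rewrite mxE.
have -> : (nat_of_ord i == 0%N) = false.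
  by apply/negP => /eqP h; move/negP: ne; apply; apply/eqP/val_inj.
by rewrite mulr0.
Qed.

Lemma nth_nseqF N m : nth false (nseq N false) m = false.
Proof. by rewrite nth_nseq; case: ifP. Qed.

Lemma main_ineq a (al be ga : seq bool) N n :
  Hseq (fun m => (Ln a m)%:R) (gv al be ga) n 0 <=
  Hseq (fun m => (Ln false m)%:R) (gv al al (nseq N false)) n 0.
Proof.
case: n => [|k]; first by case: a.
have hv := inv_seq (base_inv a (ltn_ord (gv al be ga 0))) k.
have /andP [_ Hle] := hv 0%N isT.
have Hg : forall m, nat_of_ord (gv al al (nseq N false) m) = cu (nth false al m).
  by move=> m; rewrite gv_val nth_nseqF /cu; case: (nth false al m).
have hu := useq Hg (@base_u) (base_inv false (ltn_ord (gv al al (nseq N false) 0))) k.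
have Es : (fun m => (4 <= gv al be ga m)%N) =1 nth false al by move=> m; rewrite gv_top.
move: Hle; rewrite (eq_AB _ Es) /bnd myxor0 ?ltn_ord // gv_val.
have [H1 [H2 H3]] := AB_prop (nth false al) k.
move: hu; case: (nth false al k) => /= [[_ ->]|[-> _]];
  case: (nth false be k); case: (nth false ga k) => /=; rewrite ?inE /=; lra.
Qed.

Theorem lemma3 (n : nat) (alpha beta gamma : n.-tuple bool) (a : bool) :
  padp a false alpha beta gamma + padp (~~ a) true alpha beta gamma
  <= padp false false alpha alpha [tuple of nseq n false]
     + padp true true alpha alpha [tuple of nseq n false].
Proof.
have Pv : \prod_(i < n) Amat (omega alpha beta gamma i) = \prod_(i < n) Amat (gv alpha beta gamma i).
  by apply: eq_bigr => i _; rewrite /omega /gv !(tnth_nth false).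
have Pu : \prod_(i < n) Amat (omega alpha alpha [tuple of nseq n false] i)
        = \prod_(i < n) Amat (gv alpha alpha (nseq n false) i).
  by apply: eq_bigr => i _; rewrite /omega /gv !(tnth_nth false).
have addE : forall (A B : 'rV[rat]_8) (P : 'M[rat]_8), (A *m P) 0 0 + (B *m P) 0 0 = ((A + B) *m P) 0 0.
  by move=> A B P; rewrite mulmxDl [X in _ = X]mxE.
rewrite /padp.
rewrite !e0P Pv Pu !addE !link.
have Ev : Hseq (fun m => (Lvec a false + Lvec (~~ a) true) 0 (inord m)) (gv alpha beta gamma) n 0
    = Hseq (fun m => (Ln a m)%:R) (gv alpha beta gamma) n 0.
  by apply: Hseq_ext => // m hm; apply: Lsum.
have Eu : Hseq (fun m => (Lvec false false + Lvec true true) 0 (inord m)) (gv alpha alpha (nseq n false)) n 0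
    = Hseq (fun m => (Ln false m)%:R) (gv alpha alpha (nseq n false)) n 0.
  by apply: Hseq_ext => // m hm; apply: (Lsum false).
rewrite Ev Eu.
exact: main_ineq.
Qed.
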